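(* Fix an odd integer $d\ge3$. Then there is a function $f(n)\to 0$ as $n\to\infty$ such that for every even $n$, the set $\mathrm{Zer}_1(d,n)=\{A\in\Omega_1(d,n):\operatorname{Per}(A)=0\}$ contains vertices of the polytope $\Omega_1(d,n)$ from at least $n^{n^{3/2}(1/2-f(n))}$ distinct species.
   Context: Let $I_n=\{1,\dots,n\}$. A $d$-dimensional matrix of order $n$ is a function $I_n^d\to\mathbb R$. A line is the set of positions obtained by varying one coordinate and fixing the others. A diagonal is a selection of $n$ positions any two of which differ in every coordinate; $\operatorname{Per}(A)$ is the sum over diagonals of the product of the entries on the diagonal. $\Omega_1(d,n)$ is the set of non-negative $d$-dimensional matrices of order $n$ whose entries in each line sum to $1$; it is a convex polytope. The wreath product $\mathcal S_n\wr\mathcal S_d$ acts on $d$-dimensional matrices of order $n$ by permuting the coordinates and independently permuting the values within each coordinate; this action preserves $\Omega_1(d,n)$, and a species is an orbit of this action. *)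

(* Defs.v *)
From HB Require Import structures.
From mathcomp Require Import all_boot all_order all_algebra all_fingroup.
From mathcomp Require Import all_classical all_reals all_analysis.
Set Implicit Arguments. Unset Strict Implicit. Unset Printing Implicit Defensive.
Import Order.TTheory GRing.Theory Num.Theory.
Local Open Scope ring_scope.

Definition pos (d n : nat) := {ffun 'I_d -> 'I_n}.
Definition dmat (R : Type) (d n : nat) := {ffun pos d n -> R}.

(* x with coordinate k replaced by i; {upd x k i | i < n} is a line *)
Definition upd (d n : nat) (x : pos d n) (k : 'I_d) (i : 'I_n) : pos d n :=
  [ffun j => if j == k then i else x j].

Definition in_Omega1 (R : realType) (d n : nat) (A : dmat R d n) : Prop :=
  (forall x, 0 <= A x) /\
  (forall (k : 'I_d) (x : pos d n), \sum_(i < n) A (upd x k i) = 1).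

Definition is_diagonal (d n : nat) (D : {set pos d n}) : bool :=
  (#|D| == n) &&
  [forall x in D, forall y in D, (x != y) ==> [forall k, x k != y k]].

Definition Per (R : realType) (d n : nat) (A : dmat R d n) : R :=
  \sum_(D : {set pos d n} | is_diagonal D) \prod_(x in D) A x.

Definition is_vertex (R : realType) (d n : nat) (A : dmat R d n) : Prop :=
  in_Omega1 A /\
  forall (B C : dmat R d n) (t : R), in_Omega1 B -> in_Omega1 C ->
    0 < t < 1 -> (forall x, A x = t * B x + (1 - t) * C x) -> B = C.

(* action of (s; t_1..t_d) in S_n wr S_d: permute coordinates by s and
   the values in coordinate k by t k *)
Definition wr_act (R : realType) (d n : nat) (s : {perm 'I_d})
  (t : 'I_d -> {perm 'I_n}) (A : dmat R d n) : dmat R d n :=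
  [ffun x : pos d n => A [ffun k => t k (x (s k))]].

Definition same_species (R : realType) (d n : nat) (A B : dmat R d n) : Prop :=
  exists (s : {perm 'I_d}) (t : 'I_d -> {perm 'I_n}), B = wr_act s t A.

(* Main.v *)
Require Import Defs.
From HB Require Import structures.
From mathcomp Require Import all_boot all_order all_algebra all_fingroup.
From mathcomp Require Import all_classical all_reals all_analysis.
From mathcomp Require Import zify ring lra.
From Stdlib Require PeanoNat.
Import Order.TTheory GRing.Theory Num.Theory numFieldNormedType.Exports.

Module Aux.
Set Implicit Arguments. Unset Strict Implicit. Unset Printing Implicit Defensive.

Definition ev (t : nat) (b p : bool) : nat :=
  match t with
  | 0 => if b then (if p then 0 else 2) else 1
  | 1 => if b then 1 else (if p then 0 else 2)
  | 2 => 3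
  | _ => if p then 2 else 0
  end.

Definition qq (n : nat) := n.-1 %/ 24.

Definition bitof (n : nat) (b : seq bool) (r c : nat) : bool :=
  nth false b ((r %/ 4) * n./2 + c./2).

Definition sigm (n : nat) (b : seq bool) (r c : nat) : nat :=
  if r < 4 * qq n then 4 * (r %/ 4) + ev (r %% 4) (bitof n b r c) (odd c) else r.

Definition Lsym (n : nat) (b : seq bool) (r c : nat) : nat := (sigm n b r c + c) %% n.

Lemma ev_le3 t b p : ev t b p <= 3.
Proof. by case: t => [|[|[|t]]]; case: b; case: p. Qed.

Lemma ev_inj t t' b p : t < 4 -> t' < 4 -> ev t b p = ev t' b p -> t = t'.
Proof.
by case: t => [|[|[|[|t]]]] //; case: t' => [|[|[|[|t']]]] //; case: b; case: p.
Qed.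

Lemma qq_le n : 24 * qq n <= n.-1.
Proof. rewrite /qq; lia. Qed.

Lemma sig_lt n b r c : r < n -> sigm n b r c < n.
Proof.
move=> rn; rewrite /sigm; case: ifP => // h.
have := ev_le3 (r %% 4) (bitof n b r c) (odd c); have := qq_le n; lia.
Qed.

Lemma sig_le n b r c : sigm n b r c <= r + (if r < 4 * qq n then 3 else 0).
Proof.
rewrite /sigm; case h: (r < 4 * qq n); first last. by rewrite addn0.
have := ev_le3 (r %% 4) (bitof n b r c) (odd c); lia.
Qed.

Lemma sig_ge n b r c : r <= sigm n b r c + (if r < 4 * qq n then 3 else 0).
Proof. rewrite /sigm; case h: (r < 4 * qq n); lia. Qed.

Lemma sig_inj_r n b c r r' : sigm n b r c = sigm n b r' c -> r = r'.
Proof.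
rewrite /sigm.
have e1 := ev_le3 (r %% 4) (bitof n b r c) (odd c).
have e2 := ev_le3 (r' %% 4) (bitof n b r' c) (odd c).
case: ifP => h1; case: ifP => h2; try lia.
move=> E.
have jj : r %/ 4 = r' %/ 4 by lia.
have bb : bitof n b r c = bitof n b r' c by rewrite /bitof jj.
rewrite bb jj in E.
have tt : r %% 4 = r' %% 4.
  apply: (@ev_inj _ _ (bitof n b r' c) (odd c)); try lia.
lia.
Qed.

Lemma modadd_inj n a a' c : a < n -> a' < n -> (a + c) %% n = (a' + c) %% n -> a = a'.
Proof.
move=> ha ha' /eqP; rewrite eqn_modDr !modn_small // => /eqP //.
Qed.

Lemma Lsym_inj_r n b c r r' : r < n -> r' < n -> Lsym n b r c = Lsym n b r' c -> r = r'.
Proof.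
move=> hr hr' /modadd_inj E; apply: (sig_inj_r (n:=n) (b:=b) (c:=c)).
by apply: E; apply: sig_lt.
Qed.

Lemma mod_cases n a a' : a < 2 * n -> a' < 2 * n -> a %% n = a' %% n ->
  [\/ a = a', a = a' + n | a' = a + n].
Proof.
move=> h1 h2 E.
have d1 := divn_eq a n; have d2 := divn_eq a' n.
case: (ltnP a n) => l1; case: (ltnP a' n) => l2.
- by constructor 1; rewrite -(modn_small l1) -(modn_small l2).
- have : a' - n < n by lia.
  move=> l3; have : a' %% n = a' - n.
    by rewrite -{1}(subnK (_ : n <= a')) // modnDr modn_small.
  move=> e3; rewrite e3 modn_small // in E; constructor 3; lia.
- have : a - n < n by lia.
  move=> l3; have : a %% n = a - n.
    by rewrite -{1}(subnK (_ : n <= a)) // modnDr modn_small.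
  move=> e3; rewrite e3 modn_small // in E; constructor 2; lia.
- have : a - n < n by lia. have : a' - n < n by lia.
  move=> l4 l3; have : a %% n = a - n.
    by rewrite -{1}(subnK (_ : n <= a)) // modnDr modn_small.
  have : a' %% n = a' - n.
    by rewrite -{1}(subnK (_ : n <= a')) // modnDr modn_small.
  move=> e4 e3; rewrite e3 e4 in E; constructor 1; lia.
Qed.

Lemma Lsym_inj_c n b r c c' : ~~ odd n -> r < n -> c < n -> c' < n ->
  Lsym n b r c = Lsym n b r c' -> c = c'.
Proof.
move=> evn rn cn cn'; rewrite /Lsym /sigm.
case: ifP => h.
- rewrite -[4 * _ + _ + c]addnA -[4 * _ + _ + c']addnA => /eqP; rewrite eqn_modDl => /eqP.
  set e := ev _ _ (odd c); set e' := ev _ _ (odd c').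
  have le1 : e <= 3 by apply: ev_le3.
  have le2 : e' <= 3 by apply: ev_le3.
  have n25 : 25 <= n by have := qq_le n; lia.
  move/mod_cases => HH.
  have {HH} HH : [\/ e + c = e' + c', e + c = e' + c' + n | e' + c' = e + c + n] by apply: HH; lia.
  move: HH.
  have := odd_double_half n; have := odd_double_half c; have := odd_double_half c'.
  rewrite (negbTE evn).
  rewrite /e /e' /bitof.
  case E: (c./2 == c'./2).
  + move/eqP: E => E; rewrite E.
    case: (r %% 4) (ltn_pmod r (isT : 0 < 4)) => [|[|[|[|t]]]] // _;
    case: (nth _ _ _); case: (odd c); case: (odd c'); simpl; move=> h1 h2 h3 HH; case: HH; lia.
  + move/eqP: E => E.
    case: (r %% 4) (ltn_pmod r (isT : 0 < 4)) => [|[|[|[|t]]]] // _;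
    case: (nth _ _ (_ + c./2)); case: (nth _ _ (_ + c'./2)); case: (odd c); case: (odd c'); simpl; move=> h1 h2 h3 HH; case: HH; lia.
- by rewrite ![r + _]addnC => /modadd_inj; apply.
Qed.


Definition c0 d n (x : pos d n) : nat := (\sum_(k < d | val k == 0) x k)%N.
Definition cl d n (x : pos d n) : nat := (\sum_(k < d | val k == d.-1) x k)%N.
Definition mid d (k : 'I_d) : bool := (0 < val k)%N && (val k < d.-1)%N.
Definition cm d n (x : pos d n) : nat := (\sum_(k < d | mid k) x k)%N.
Definition Amat (R : realType) d n (b : seq bool) : dmat R d n :=
  [ffun x => if cl x == Lsym n b (c0 x) (cm x %% n) then 1%R else 0%R].

Lemma sum_pick d n (x : pos d n) (k0 : 'I_d) (P : pred 'I_d) :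
  P =1 pred1 k0 -> (\sum_(k | P k) x k)%N = x k0.
Proof. by move=> h; rewrite (big_pred1 k0 h). Qed.

Lemma upd_out d n (x : pos d n) k i (P : pred 'I_d) : ~~ P k ->
  (\sum_(k' | P k') upd x k i k')%N = (\sum_(k' | P k') x k')%N.
Proof.
move=> nP; apply: eq_bigr => k' Pk'; rewrite ffunE; case: eqP => // E.
by move: nP; rewrite -E Pk'.
Qed.

Lemma upd_in d n (x : pos d n) k i (P : pred 'I_d) : P k ->
  (\sum_(k' | P k') upd x k i k')%N = (i + \sum_(k' | P k' && (k' != k)) x k')%N.
Proof.
move=> Pk; rewrite (bigD1 k) //= ffunE eqxx; congr (_ + _)%N.
by apply: eq_bigr => k' /andP[_ ne]; rewrite ffunE (negbTE ne).
Qed.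

Local Open Scope ring_scope.

Lemma sum_ind1 (R : realType) n (g : nat -> nat) v :
  (forall i, (i < n)%N -> (g i < n)%N) ->
  (forall i j, (i < n)%N -> (j < n)%N -> g i = g j -> i = j) -> (v < n)%N ->
  \sum_(i < n) (if v == g i then 1 else 0 : R) = 1.
Proof.
move=> gb gi vn.
pose G (i : 'I_n) : 'I_n := Ordinal (gb i (ltn_ord i)).
have Ginj : injective G.
  by move=> i j /(congr1 val) /= /gi => h; apply/val_inj/h.
have [G' GK G'K] := injF_bij Ginj.
pose i0 := G' (Ordinal vn).
have Gi0 : g i0 = v by have := G'K (Ordinal vn); move/(congr1 val).
rewrite (bigD1 i0) //= -Gi0 eqxx big1 ?addr0 // => i ne.
case: eqP => // E; exfalso; move/negP: ne; apply; apply/eqP/val_inj/gi => //; apply: ltn_ord.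
Qed.

Lemma sum_ind1' (R : realType) n (v : nat) : (v < n)%N ->
  \sum_(i < n) (if (nat_of_ord i) == v then 1 else 0 : R) = 1.
Proof.
move=> vn; transitivity (\sum_(i < n) (if v == id (nat_of_ord i) then 1 else 0 : R)).
  by apply: eq_bigr => i _; rewrite eq_sym.
by apply: (@sum_ind1 R n (fun i => i) v).
Qed.

Lemma Amat_lines (R : realType) d n b : (3 <= d)%N -> ~~ odd n -> (0 < n)%N ->
  forall k x, \sum_(i < n) Amat R d n b (upd x k i) = 1.
Proof.
move=> d3 evn n0 k x.
have d0 : (0 < d)%N by lia.
have dl : (d.-1 < d)%N by lia.
pose k0 := Ordinal d0; pose kl := Ordinal dl.
have hc0 z : c0 z = z k0.
  by apply: sum_pick => j /=; rewrite -(inj_eq val_inj).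
have hcl z : cl z = z kl.
  by apply: sum_pick => j /=; rewrite -(inj_eq val_inj).
have k0l : (k0 != kl) by rewrite -(inj_eq val_inj) /=; lia.
have lk0 : kl != k0 by rewrite eq_sym.
have nm0 : ~~ mid k0 by rewrite /mid /=.
have nml : ~~ mid kl by rewrite /mid /=; lia.
case: (eqVneq k kl) => [->|nkl].
  under eq_bigr => i _ do rewrite ffunE hc0 hcl !ffunE eqxx (negbTE k0l) /cm upd_out //.
  by apply: sum_ind1'; apply: ltn_pmod.
case: (eqVneq k k0) => [->|nk0].
  under eq_bigr => i _ do rewrite ffunE hc0 hcl !ffunE eqxx (negbTE lk0) /cm upd_out //.
  apply: (@sum_ind1 R n (fun i => Lsym n b i (cm x %% n)) (x kl)).
    by move=> *; apply: ltn_pmod.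
    by move=> i j hi hj; apply: Lsym_inj_r.
  exact: ltn_ord.
have nkl' : kl != k by rewrite eq_sym.
have nk0' : k0 != k by rewrite eq_sym.
have mk : mid k.
  move: nkl nk0; rewrite /mid -!(inj_eq val_inj) /=; have := ltn_ord k; lia.
under eq_bigr => i _ do rewrite ffunE hc0 hcl !ffunE (negbTE nkl') (negbTE nk0') /cm upd_in //.
apply: (@sum_ind1 R n (fun i => Lsym n b (x k0) ((i + \sum_(k' | mid k' && (k' != k)) x k')%N %% n)) (x kl)).
  by move=> *; apply: ltn_pmod.
  move=> i j hi hj /Lsym_inj_c H.
  have {}H := H evn (ltn_ord _) (ltn_pmod _ n0) (ltn_pmod _ n0).
  by apply: (modadd_inj hi hj H).
exact: ltn_ord.
Qed.

Lemma vertex01 (R : realType) d n (A : dmat R d n) : (0 < d)%N -> in_Omega1 A ->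
  (forall x, A x = 0 \/ A x = 1) -> is_vertex A.
Proof.
move=> d0 HA A01; split => // B C t [B0 Bs] [C0 Cs] /andP[t0 t1] HB.
have le1 (D : dmat R d n) : (forall x, 0 <= D x) ->
    (forall k x, \sum_(i < n) D (upd x k i) = 1) -> forall x, D x <= 1.
  move=> D0 Ds x; pose k := Ordinal d0.
  have E : upd x k (x k) = x.
    by apply/ffunP => j; rewrite ffunE; case: eqP => // ->.
  rewrite -{1}E -(Ds k x) (bigD1 (x k)) //= lerDl sumr_ge0 // => i _.
apply/ffunP => x; have := HB x; have := B0 x; have := C0 x.
have := le1 B B0 Bs x; have := le1 C C0 Cs x.
case: (A01 x) => ->; nra.
Qed.

Lemma diag_sum d n (D : {set pos d n}) k (g : nat -> nat) : #|D| = n ->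
  {in D &, injective (fun x : pos d n => x k)} ->
  (\sum_(x in D) g (x k))%N = (\sum_(i < n) g i)%N.
Proof.
move=> cD inj.
rewrite -(big_imset (fun i : 'I_n => g i) inj).
have -> : (fun x : pos d n => x k) @: D = [set: 'I_n].
  by apply/eqP; rewrite eqEcard finset.subsetT cardsT card_ord card_in_imset // cD /=.
by apply: eq_bigl => i; rewrite finset.in_setT.
Qed.

Lemma sum_iota2 n : ((\sum_(i < n) i) * 2 = n * n.-1)%N.
Proof.
elim: n => [|n IH]; first by rewrite big_ord0.
rewrite big_ord_recr /= mulnDl IH; case: n {IH} => [|n] //=; lia.
Qed.

Lemma card_mid d : (2 <= d)%N -> (\sum_(k < d | mid k) 1)%N = (d - 2)%N.
Proof.
move=> d2.
have -> : (\sum_(k < d | mid k) 1)%N = (\sum_(0 <= k < d | (0 < k < d.-1)%N) 1)%N.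
  by rewrite big_mkord.
rewrite sum1_count /index_iota subn0.
case: d d2 => [|[|d']] // _.
rewrite /=; case: d' => [|d'] //.
rewrite (_ : iota 2 d'.+1 = iota 2 d' ++ [:: 2 + d']); last by rewrite -[d'.+1]addn1 iotaD.
rewrite count_cat /= addn0.
rewrite (@eq_in_count _ _ predT); last first.
  by move=> k; rewrite mem_iota => /andP[h1 h2]; apply/andP; split; lia.
rewrite count_predT size_iota; lia.
Qed.

Lemma sum_w n q : (4 * q <= n)%N ->
  (\sum_(i < n) (if (i < 4 * q)%N then 3 else 0))%N = (12 * q)%N.
Proof.
move=> h.
rewrite -(big_mkord xpredT (fun i => if (i < 4 * q)%N then 3 else 0)%N).
rewrite (big_cat_nat _ (n := 4 * q)) //=.
rewrite (eq_big_nat _ _ (F2 := fun _ => 3%N)); last by move=> i /andP[_ ->].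
rewrite sum_nat_const_nat big1_seq ?addn0; first lia.
move=> i /andP[_]; rewrite mem_index_iota => /andP[hi _].
by rewrite ltnNge hi.
Qed.

Lemma Per_Amat (R : realType) d n b : odd d -> (3 <= d)%N -> ~~ odd n -> (0 < n)%N ->
  Per (Amat R d n b) = 0.
Proof.
move=> dodd d3 evn n0.
rewrite /Per big1 // => D /andP[/eqP cD /forallP Hd].
have inj k : {in D &, injective (fun x : pos d n => x k)}.
  move=> x y xD yD /= Exy; apply/eqP; apply: contraT => nxy.
  have := Hd x; rewrite xD /= => /forallP /(_ y); rewrite yD nxy /= => /forallP /(_ k).
  by rewrite Exy eqxx.
case: (boolP [exists x in D, Amat R d n b x == 0]) => [/existsP [x /andP [xD /eqP Ax0]] | /existsPn H].
  by rewrite (bigD1 x) //= Ax0 mul0r.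
exfalso.
have d0 : (0 < d)%N by lia.
have dl : (d.-1 < d)%N by lia.
pose k0 := Ordinal d0; pose kl := Ordinal dl.
have hc0 z : c0 z = z k0.
  by apply: sum_pick => j /=; rewrite -(inj_eq val_inj).
have hcl z : cl z = z kl.
  by apply: sum_pick => j /=; rewrite -(inj_eq val_inj).
have Hx x : x \in D -> cl x = Lsym n b (c0 x) (cm x %% n).
  move=> xD; have := H x; rewrite xD /= ffunE.
  case: ifP => [/eqP E _|_]; first exact: E.
  by rewrite eqxx.
set K := (\sum_(i < n) i)%N.
have sumcl : (\sum_(x in D) cl x)%N = K.
  under eq_bigr => x _ do rewrite hcl.
  exact: (diag_sum (fun i => i) cD (inj kl)).
have Ecl : (\sum_(x in D) cl x)%N = (\sum_(x in D) Lsym n b (c0 x) (cm x %% n))%N.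
  by apply: eq_bigr => x xD; apply: Hx.
set P := (\sum_(x in D) sigm n b (c0 x) (cm x %% n))%N.
have Hcm : (\sum_(x in D) cm x)%N = ((d - 2) * K)%N.
  rewrite /cm exchange_big /=.
  rewrite (eq_bigr (fun _ => 1 * K)%N); last first.
    by move=> k _; rewrite mul1n; exact: (diag_sum (fun i => i) cD (inj k)).
  by rewrite -big_distrl /= card_mid //; lia.
have modeq : (K %% n = (P + (d - 2) * K) %% n)%N.
  rewrite -{1}sumcl Ecl /Lsym modn_summ big_split /= -/P -Hcm.
  apply/eqP; rewrite -[X in _ == X]modnDmr -[X in X == _]modnDmr modn_summ //.
have q4 : (4 * qq n <= n)%N by have := qq_le n; lia.
have bndU : (P <= K + 12 * qq n)%N.
  apply: (@leq_trans (\sum_(x in D) (c0 x + (if c0 x < 4 * qq n then 3 else 0)))%N).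
    by apply: leq_sum => x _; apply: sig_le.
  under eq_bigr => x _ do rewrite hc0.
  rewrite (diag_sum (fun i => i + (if i < 4 * qq n then 3 else 0))%N cD (inj k0)).
  by rewrite big_split /= sum_w.
have bndL : (K <= P + 12 * qq n)%N.
  have -> : K = (\sum_(x in D) c0 x)%N.
    under eq_bigr => x _ do rewrite hc0.
    by rewrite (diag_sum (fun i => i) cD (inj k0)).
  apply: (@leq_trans (\sum_(x in D) (sigm n b (c0 x) (cm x %% n) + (if c0 x < 4 * qq n then 3 else 0)))%N).
    by apply: leq_sum => x _; apply: sig_ge.
  rewrite big_split /= -/P leq_add2l.
  under eq_bigr => x _ do rewrite hc0.
  by rewrite (diag_sum (fun i => (if i < 4 * qq n then 3 else 0))%N cD (inj k0)) sum_w.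
have K2 := sum_iota2 n; rewrite -/K in K2.
have nm := odd_double_half n; rewrite (negbTE evn) /= add0n in nm.
have dd := odd_double_half d; rewrite dodd in dd.
have q24 := qq_le n.
set e := (d./2 - 1)%N.
have E1 : ((d - 2) * K = e * n.-1 * n + K)%N.
  have -> : (d - 2 = e * 2 + 1)%N by rewrite /e; lia.
  rewrite mulnDl mul1n -mulnA (mulnC 2 K) K2 (mulnC n n.-1) mulnA //.
rewrite E1 (addnC P) -addnA modnMDl in modeq.
have P0 : (P %% n = 0)%N.
  move/eqP: modeq; rewrite -{1}(addn0 K) eqn_modDl mod0n => /eqP <-.
  done.
have PE := divn_eq P n; rewrite P0 addn0 in PE.
set w := (P %/ n)%N in PE.
set m := n./2 in nm.
set q := qq n in bndU bndL q24 q4.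
rewrite -muln2 in nm.
have e1 : (n * n = 2 * (m * n))%N by rewrite -{1}nm mulnAC mulnC.
have h1 : (n * n.-1 = 2 * (m * n) - n)%N by rewrite -subn1 mulnBr muln1 e1.
rewrite h1 in K2.
case: (ltnP w m) => hw.
  have : (w * n <= (m - 1) * n)%N by apply: leq_mul; lia.
  rewrite mulnBl mul1n => h2.
  have : (n <= m * n)%N by rewrite -{1}(mul1n n); apply: leq_mul; lia.
  lia.
have : (m * n <= w * n)%N by apply: leq_mul; lia.
lia.
Qed.

Local Close Scope ring_scope.

Lemma Amat_inj (R : realType) d n (t t' : (qq n * n./2).-tuple bool) :
  (3 <= d)%N -> (0 < n)%N -> Amat R d n t = Amat R d n t' -> t = t'.
Proof.
move=> d3 n0 EA.
have d0 : (0 < d)%N by lia.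
have dl : (d.-1 < d)%N by lia.
have d1 : (1 < d)%N by lia.
pose k0 := Ordinal d0; pose kl := Ordinal dl; pose k1 := Ordinal d1.
have hc0 z : c0 z = z k0.
  by apply: sum_pick => j /=; rewrite -(inj_eq val_inj).
have hcl z : cl z = z kl.
  by apply: sum_pick => j /=; rewrite -(inj_eq val_inj).
have L r c : (r < n)%N -> (c < n)%N -> Lsym n t r c = Lsym n t' r c.
  move=> rn cn.
  pose x : pos d n := [ffun k : 'I_d => if val k == 0%N then Ordinal rn
      else if val k == 1%N then Ordinal cn
      else if val k == d.-1 then Ordinal (ltn_pmod (Lsym n t r c) n0)
      else Ordinal n0].
  have f0 : (d.-1 == 0)%N = false by apply/eqP; lia.
  have f1 : (d.-1 == 1)%N = false by apply/eqP; lia.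
  have xc0 : c0 x = r by rewrite hc0 ffunE.
  have xcl' : cl x = (Lsym n t r c %% n)%N by rewrite hcl ffunE /= f0 f1 eqxx.
  have xcl : cl x = Lsym n t r c by rewrite xcl' /Lsym modn_mod.
  have xcm : cm x = c.
    have mk1 : mid k1 by rewrite /mid /=; lia.
    rewrite /cm (bigD1 k1) //= ffunE /= big1 ?addn0 // => k /andP[mk nk].
    rewrite ffunE.
    have h0 : (val k == 0)%N = false by move: mk; rewrite /mid; case: eqP => // ->.
    have h1 : (val k == 1)%N = false.
      by apply/negbTE; move: nk; apply: contra => /eqP h; apply/eqP/val_inj.
    have hl : (val k == d.-1)%N = false by move: mk; rewrite /mid; case: eqP => // ->; lia.
    by rewrite h0 h1 hl.
  have := congr1 (fun A : dmat R d n => A x) EA; rewrite !ffunE xc0 xcl xcm modn_small // eqxx.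
  by case: eqP => // _ /eqP; rewrite oner_eq0.
have n25 : (0 < qq n)%N -> (25 <= n)%N by have := qq_le n; lia.
apply: val_inj; apply: (@eq_from_nth _ false); rewrite ?size_tuple // => idx hidx.
set m := n./2 in hidx *.
have m0 : (0 < m)%N by move: hidx; case: m => //; rewrite muln0.
have q0 : (0 < qq n)%N by move: hidx; case: (qq n).
set j := (idx %/ m)%N; set i := (idx %% m)%N.
have hj : (j < qq n)%N by rewrite /j ltn_divLR // mulnC.
have hi : (i < m)%N by apply: ltn_pmod.
have hm := odd_double_half n; rewrite -/m in hm.
have qle := qq_le n.
have := L (4 * j)%N (2 * i)%N ltac:(lia) ltac:(lia).
rewrite /Lsym /sigm.
have -> : (4 * j < 4 * qq n)%N by lia.
have -> : (4 * j %/ 4 = j)%N by rewrite mulKn.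
have -> : (4 * j %% 4 = 0)%N by rewrite modnMr.
have oc : odd (2 * i) = false by rewrite oddM.
have hb : forall u : seq bool, bitof n u (4 * j) (2 * i) = nth false u idx.
  move=> u; rewrite /bitof mulKn // -/m.
  have -> : ((2 * i)./2 = i)%N by rewrite mul2n doubleK.
  by rewrite /j /i -divn_eq.
rewrite !hb oc /= -!addnA ![(_ + (2 * i))%N]addnC !addnA.
have n25' := n25 q0.
case: (nth false (tval t) idx); case: (nth false (tval t') idx) => //.
all: by move/eqP; rewrite eqn_modDl !modn_small //; lia.
Qed.

Definition orbl (R : realType) d n (A : dmat R d n) : seq (dmat R d n) :=
  [seq wr_act s (fun k => t k) A | s : {perm 'I_d} <- enum {perm 'I_d},
     t : {ffun 'I_d -> {perm 'I_n}} <- enum {ffun 'I_d -> {perm 'I_n}}].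

Definition covr (R : realType) d n (S : seq (dmat R d n)) := flatten (map (@orbl R d n) S).

Definition addrep (R : realType) d n (S : seq (dmat R d n)) (A : dmat R d n) :=
  if A \in covr S then S else rcons S A.

Definition reps (R : realType) d n (F : seq (dmat R d n)) := foldl (@addrep R d n) [::] F.

Lemma orb_refl (R : realType) d n (A : dmat R d n) : A \in orbl A.
Proof.
have E : A = wr_act 1%g (fun k => ([ffun _ => (1%g : {perm 'I_n})] : {ffun 'I_d -> {perm 'I_n}}) k) A.
  by apply/ffunP => x; rewrite !ffunE; congr (A _); apply/ffunP => k; rewrite !ffunE !perm1.
rewrite {1}E.
by apply/allpairsP; exists (1%g, [ffun _ => 1%g]); rewrite /= !mem_enum.
Qed.

Lemma orb_sym (R : realType) d n (A B : dmat R d n) : B \in orbl A -> A \in orbl B.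
Proof.
case/allpairsP => [[s t]] /= [_ _ ->].
pose t' : {ffun 'I_d -> {perm 'I_n}} := [ffun j => (t (s^-1 j))^-1]%g.
have E : A = wr_act (s^-1)%g (fun k => t' k) (wr_act s (fun k => t k) A).
  apply/ffunP => x; rewrite !ffunE; congr (A _); apply/ffunP => k; rewrite !ffunE.
  by rewrite permK permKV.
rewrite {1}E.
by apply/allpairsP; exists ((s^-1)%g, t'); rewrite /= !mem_enum.
Qed.

Lemma same_species_orb (R : realType) d n (A B : dmat R d n) : same_species A B -> B \in orbl A.
Proof.
case=> s [t ->].
have -> : wr_act s t A = wr_act s (fun k => (finfun t) k) A.
  by apply/ffunP => x; rewrite !ffunE; congr (A _); apply/ffunP => k; rewrite !ffunE.
by apply/allpairsP; exists (s, finfun t); rewrite /= !mem_enum.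
Qed.

Lemma size_orb (R : realType) d n (A : dmat R d n) : size (orbl A) = (d`! * (n`! ^ d))%N.
Proof.
by rewrite /orbl size_allpairs -!cardE card_Sn card_ffun card_Sn card_ord.
Qed.

Lemma size_cover (R : realType) d n (S : seq (dmat R d n)) :
  size (covr S) = (size S * (d`! * (n`! ^ d)))%N.
Proof.
elim: S => [|A S IH] //=; rewrite /covr /= size_cat -/(covr S) IH size_orb; lia.
Qed.

Definition Inv (R : realType) d n (S : seq (dmat R d n)) :=
  uniq S /\ (forall A B, A \in S -> B \in S -> B \in orbl A -> A = B).

Lemma addrep_spec (R : realType) d n (S : seq (dmat R d n)) A : Inv S ->
  [/\ Inv (addrep S A), A \in covr (addrep S A), {subset S <= addrep S A} &
      {subset addrep S A <= rcons S A}].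
Proof.
move=> [uS pS]; rewrite /addrep; case: ifP => hA.
  split; [by split | by [] | by [] | by move=> x xS; rewrite mem_rcons inE xS orbT].
have nAS : A \notin S.
  apply/negP => AS; move/negP: hA; apply; apply/flatten_mapP; exists A => //; exact: orb_refl.
split => //.
- split; first by rewrite rcons_uniq nAS.
  move=> X Y; rewrite !mem_rcons !inE => /orP[/eqP->|XS] /orP[/eqP->|YS] // hXY.
  + exfalso; move/negP: hA; apply; apply/flatten_mapP; exists Y => //; exact: orb_sym.
  + exfalso; move/negP: hA; apply; apply/flatten_mapP; exists X => //.
  + exact: pS.
- apply/flatten_mapP; exists A; [by rewrite mem_rcons inE eqxx | exact: orb_refl].
- by move=> x xS; rewrite mem_rcons inE xS orbT.
Qed.

Lemma cover_sub (R : realType) d n (S S' : seq (dmat R d n)) :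
  {subset S <= S'} -> {subset covr S <= covr S'}.
Proof.
move=> sub x /flatten_mapP [y yS xy]; apply/flatten_mapP; exists y => //; exact: sub.
Qed.

Lemma foldl_spec (R : realType) d n (F S : seq (dmat R d n)) : Inv S ->
  [/\ Inv (foldl (@addrep R d n) S F), {subset F <= covr (foldl (@addrep R d n) S F)},
      {subset S <= foldl (@addrep R d n) S F} &
      {subset foldl (@addrep R d n) S F <= S ++ F}].
Proof.
elim: F S => [|A F IH] S iS /=.
  by split => // x; rewrite cats0.
have [i1 i2 i3 i4] := addrep_spec A iS.
have [j1 j2 j3 j4] := IH _ i1.
split => //.
- move=> x; rewrite inE => /orP[/eqP->|xF]; last exact: j2.
  exact: (cover_sub j3).
- by move=> x xS; apply/j3/i3.
- move=> x /j4; rewrite !mem_cat => /orP[/i4|xF].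
  + rewrite mem_rcons in_cons => /orP[/eqP->|xS]; first by rewrite in_cons eqxx orbT.
    by rewrite xS.
  + by rewrite in_cons xF !orbT.
Qed.

Definition fam (R : realType) d n : seq (dmat R d n) :=
  [seq Amat R d n (tval t) | t <- enum {: (qq n * n./2).-tuple bool}].
Definition Sfam (R : realType) d n := reps (fam R d n).

Lemma Sfam_spec (R : realType) d n : (3 <= d)%N -> (0 < n)%N ->
  [/\ uniq (Sfam R d n),
      (forall A B, A \in Sfam R d n -> B \in Sfam R d n -> same_species A B -> A = B),
      {subset Sfam R d n <= fam R d n} &
      (2 ^ (qq n * n./2) <= size (Sfam R d n) * (d`! * n`! ^ d))%N].
Proof.
move=> d3 n0.
have i0 : Inv ([::] : seq (dmat R d n)) by split.
have [[u p] cov sub1 sub2] := @foldl_spec R d n (fam R d n) [::] i0.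
split => //.
- by move=> A B hA hB /same_species_orb; apply: p.
- rewrite -size_cover.
  have -> : (2 ^ (qq n * n./2))%N = size (fam R d n).
    by rewrite size_map -cardE card_tuple card_bool.
  apply: uniq_leq_size => //.
  rewrite map_inj_in_uniq ?enum_uniq // => t t' _ _ /Amat_inj E.
  by apply: E.
Qed.

Lemma fam_good (R : realType) d n A : odd d -> (3 <= d)%N -> ~~ odd n -> (0 < n)%N ->
  A \in fam R d n -> is_vertex A /\ Per A = 0%R.
Proof.
move=> dodd d3 evn n0 /mapP [t _ ->]; split; last exact: Per_Amat.
apply: vertex01; first lia.
- split; first by move=> x; rewrite ffunE; case: ifP => _; rewrite ?ler01 ?lexx.
  by move=> k x; apply: Amat_lines.
- by move=> x; rewrite ffunE; case: ifP => _; [right | left].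
Qed.




Lemma fact_le_exp n : n`! <= n ^ n.
Proof.
elim: n => [|n IH] //; rewrite factS expnS leq_mul2l /=.
apply: leq_trans IH _; case: n => [|n] //; by rewrite leq_exp2r.
Qed.

Lemma fact_le_2 d : d`! <= 2 ^ (d * d).
Proof.
rewrite expnM; apply: leq_trans (fact_le_exp d) _.
case: d => [|d'] //; rewrite leq_exp2r //.
exact: ltnW (ltn_expl _ (isT : 1 < 2)).
Qed.

Lemma exp_mono a b e : a <= b -> a ^ e <= b ^ e.
Proof. by case: e => [|e] // h; rewrite leq_exp2r. Qed.

Lemma pow_big u : 12 <= u -> 256 * u.+1 <= 2 ^ u.
Proof.
elim: u => [|u IH] // h.
case: (ltngtP u 11) => h'; first lia.
- by rewrite expnS; have := IH h'; lia.
- by subst u.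
Qed.

Lemma sqrt_specn n : PeanoNat.Nat.sqrt n * PeanoNat.Nat.sqrt n <= n < (PeanoNat.Nat.sqrt n).+1 * (PeanoNat.Nat.sqrt n).+1.
Proof.
have [h1 h2] := PeanoNat.Nat.sqrt_spec n (PeanoNat.Nat.le_0_l n).
apply/andP; split; [apply/ssrnat.leP | apply/ssrnat.ltP]; by [].
Qed.

Lemma eventual d : exists N, forall n, N <= n ->
  n ^ (n * (PeanoNat.Nat.sqrt n).+1) * (d`! * n`! ^ d) <= 2 ^ (qq n * n./2).
Proof.
exists ((3073 + d) * (3073 + d)) => n hN.
set s := PeanoNat.Nat.sqrt n.
have /andP[s1 s2] := sqrt_specn n; rewrite -/s in s1 s2.
have sS : 3072 + d <= s.
  rewrite leqNgt; apply/negP => h.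
  have : s.+1 * s.+1 <= (3072 + d) * (3072 + d) by apply: leq_mul.
  lia.
set u := s %/ 256.
have u12 : 12 <= u by rewrite /u leq_divRL //; lia.
have su : s.+1 <= 2 ^ u by have := pow_big u12; rewrite /u; lia.
have n2u : n <= 2 ^ (2 * u).
  rewrite mulnC expnM.
  apply: leq_trans (ltnW s2) _; apply: leq_mul => //.
have hd := fact_le_2 d.
have hnf : n`! ^ d <= 2 ^ (2 * u * (n * d)).
  have h : n`! <= 2 ^ (2 * u * n).
    rewrite expnM; apply: leq_trans (fact_le_exp n) _; exact: exp_mono n2u.
  rewrite (_ : 2 * u * (n * d) = 2 * u * n * d); last by rewrite mulnA.
  by rewrite expnM; apply: exp_mono.
have hp : n ^ (n * s.+1) <= 2 ^ (2 * u * (n * s.+1)).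
  by rewrite [X in _ <= X]expnM; exact: exp_mono n2u.
apply: (@leq_trans (2 ^ (2 * u * (n * s.+1)) * (2 ^ (d * d) * 2 ^ (2 * u * (n * d))))).
  by apply: leq_mul => //; apply: leq_mul.
rewrite -!expnD; apply: leq_pexp2l => //.
set q := qq n; set m := n./2.
have hq : n <= 24 * q + 24 by rewrite /q /qq; lia.
have hm : n <= 2 * m + 1 by rewrite /m; have := odd_double_half n; case: (odd n) => /=; lia.
have hq' : 24 * q <= n by have := qq_le n; rewrite -/q; lia.
have hm' : 2 * m <= n by rewrite /m; have := odd_double_half n; case: (odd n) => /=; lia.
have h6 : n * n <= (24 * q + 24) * (2 * m + 1) by apply: leq_mul.
have h1 : n * s.+1 + n * d <= 2 * (n * s).
  have : n * (s.+1 + d) <= n * (2 * s) by apply: leq_mul => //; lia.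
  by rewrite mulnDr mulnCA.
have h2 : 2 * u * (n * s.+1) + 2 * u * (n * d) <= 2 * u * (2 * (n * s)).
  by rewrite -mulnDr; apply: leq_mul.
have h3 : 256 * u * (n * s) <= n * n.
  have : 256 * u <= s by rewrite /u; lia.
  move=> h; apply: (@leq_trans (s * (n * s))); first by apply: leq_mul.
  by rewrite mulnCA mulnC; apply: leq_mul.
have h4 : d * d <= n by apply: leq_trans s1; apply: leq_mul; lia.
have h8 : s <= s * s by apply: leq_pmulr; lia.
have h7 : 1000 * n <= n * n by rewrite mulnC; apply: leq_mul => //; lia.
lia.
Qed.

End Aux.
Import Aux.
Unset Implicit Arguments. Set Strict Implicit. Set Printing Implicit Defensive.

Local Open Scope classical_set_scope.
Local Open Scope ring_scope.
Local Open Scope ring_scope.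

Lemma real_bound (R : realType) (n : nat) : (0 < n)%N ->
  (n%:R : R) `^ (n%:R `^ (3 / 2) * 2^-1) <= ((n ^ (n * (PeanoNat.Nat.sqrt n).+1))%N)%:R.
Proof.
move=> n0.
set s := PeanoNat.Nat.sqrt n.
have /andP[s1 s2] := sqrt_specn n; rewrite -/s in s1 s2.
have n1 : (1 : R) <= n%:R by rewrite ler1n.
have nn : (0 : R) <= n%:R by rewrite ler0n.
have e32 : (3 / 2 : R) = 1 + 2^-1 by lra.
have pw : (n%:R : R) `^ (3 / 2) = n%:R * Num.sqrt n%:R.
  rewrite e32 powRD; last by rewrite pnatr_eq0 -lt0n n0 implybT.
  by rewrite powRr1 // powR12_sqrt.
have sq : Num.sqrt (n%:R : R) <= s.+1%:R.
  have : (n%:R : R) <= s.+1%:R ^+ 2 by rewrite -natrX ler_nat; apply: ltnW; rewrite expnS expn1.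
  rewrite -(ler_sqrt (n%:R)) ?exprn_ge0 ?ler0n // sqrtr_sqr ger0_norm //.
have ex : (n%:R : R) `^ (3 / 2) * 2^-1 <= (n * s.+1)%N%:R.
  rewrite pw natrM.
  apply: (@le_trans _ _ (n%:R * Num.sqrt n%:R)).
    have : 0 <= (n%:R : R) * Num.sqrt n%:R by rewrite mulr_ge0 ?sqrtr_ge0.
    set X := _ * Num.sqrt _; lra.
  by apply: ler_wpM2l.
apply: le_trans (ler_powR n1 ex) _.
by rewrite powR_mulrn // natrX.
Qed.

Theorem corollary2p6 (R : realType) (d : nat) (hd_odd : odd d) (hd3 : (3 <= d)%N) :
  exists f : nat -> R, f n @[n --> \oo] --> (0 : R) /\
    forall n : nat, (0 < n)%N -> ~~ odd n ->
      exists S : seq (dmat R d n),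
        uniq S /\
        (forall A, A \in S -> is_vertex A /\ Per A = 0) /\
        (forall A B, A \in S -> B \in S -> same_species A B -> A = B) /\
        (n%:R `^ (n%:R `^ (3 / 2) * (2^-1 - f n)) <= (size S)%:R).
Proof.
pose cond (n : nat) := (n%:R : R) `^ (n%:R `^ (3 / 2) * 2^-1) <= (size (Sfam R d n))%:R.
exists (fun n => if cond n then 0 else 2^-1); split.
  have [N HN] := eventual d.
  apply: cvg_near_cst; exists N.+1 => // n /= hn.
  have n0 : (0 < n)%N by lia.
  have [_ _ _ cnt] := @Sfam_spec R d n hd3 n0.
  case: ifP => // hc; exfalso; move/negP: hc; apply; rewrite /cond.
  apply: (le_trans (real_bound R n n0)); rewrite ler_nat.
  have := leq_trans (HN n (ltnW hn)) cnt.
  by rewrite leq_pmul2r // muln_gt0 fact_gt0 expn_gt0 fact_gt0.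
move=> n n0 evn.
have [u p sub cnt] := @Sfam_spec R d n hd3 n0.
exists (Sfam R d n); split => //; split.
  by move=> A /sub; apply: fam_good.
split => //.
case: ifP => hc; first by rewrite subr0.
rewrite subrr mulr0 powRr0 ler1n.
move: cnt; rewrite lt0n; apply: contraTneq => ->; rewrite mul0n leqn0.
by rewrite expn_eq0.
Qed.
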